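(* As formal power series in $Q$ with coefficients in $\mathbb{Z}[T]$, $$\sum_{k=1}^{\infty}\frac{F(k)}{\prod_{i=1}^{k}(1-Q^iT^{2(i-1)})^2}=\frac{1}{\prod_{i=1}^{\infty}(1-Q^iT^{2(i-1)})},$$ where $F(1)=Q^2T^2-Q+1$ and, for $k\ge2$, $F(k)$ is the sum of the two entries of $V_k=M_{k,k}M_{k,k-1}\cdots M_{k,2}V_{k,1}$ with $$V_{k,1}=\begin{bmatrix}Q^{2k}T^{4(k-1)}(T^2-1)\\ Q^kT^{2(k-1)}\end{bmatrix},\quad M_{k,s}=\begin{bmatrix}Q^{2(k-s+1)}T^{4(k-s)}(T^2-1)+(1-Q^{k-s+1}T^{2(k-s)})^2 & Q^{k-s+1}T^{2(k-s)}(T^2-1)\\ Q^{k-s+1}T^{2(k-s)} & Q^{2(k-s+1)}T^{4(k-s)}T^2\end{bmatrix}\ (2\le s\le k).$$ *)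

(* Defs.v *)
From mathcomp Require Import all_boot all_order all_algebra.
Set Implicit Arguments. Unset Strict Implicit. Unset Printing Implicit Defensive.
Import GRing.Theory Num.Theory.
Local Open Scope ring_scope.

Notation ZT := {poly int}.
Notation PQ := {poly ZT}.

Definition Qv : PQ := 'X.
Definition Tv : PQ := ('X : ZT)%:P.

Definition fac (i : nat) : PQ := 1 - Qv ^+ i * Tv ^+ (2 * (i - 1)).

Definition Mks (k s : nat) : 'M[PQ]_2 :=
  let e := (k - s + 1)%N in
  let d := (k - s)%N in
  \matrix_(a < 2, b < 2)
    if a == 0 :> nat then
      (if b == 0 :> nat then
         Qv ^+ (2 * e) * Tv ^+ (4 * d) * (Tv ^+ 2 - 1)
           + (1 - Qv ^+ e * Tv ^+ (2 * d)) ^+ 2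
       else Qv ^+ e * Tv ^+ (2 * d) * (Tv ^+ 2 - 1))
    else
      (if b == 0 :> nat then Qv ^+ e * Tv ^+ (2 * d)
       else Qv ^+ (2 * e) * Tv ^+ (4 * d) * Tv ^+ 2).

Definition Vk1 (k : nat) : 'cV[PQ]_2 :=
  \col_(a < 2)
    if a == 0 :> nat then Qv ^+ (2 * k) * Tv ^+ (4 * (k - 1)) * (Tv ^+ 2 - 1)
    else Qv ^+ k * Tv ^+ (2 * (k - 1)).

(* Vrec k j = M_{k,j+1} M_{k,j} ... M_{k,2} V_{k,1} *)
Fixpoint Vrec (k j : nat) : 'cV[PQ]_2 :=
  match j with
  | 0 => Vk1 k
  | j'.+1 => Mks k j'.+2 *m Vrec k j'
  end.

Definition Vk (k : nat) : 'cV[PQ]_2 := Vrec k (k - 1).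

Definition F (k : nat) : PQ :=
  if k == 1%N then Qv ^+ 2 * Tv ^+ 2 - Qv + 1
  else Vk k 0 0 + Vk k 1 0.

Definition fps := nat -> ZT.

Definition fps_of_poly (p : PQ) : fps := fun n => p`_n.

Definition fps_mul (f g : fps) : fps :=
  fun n => \sum_(i < n.+1) f i * g (n - i)%N.

(* coefficients of the multiplicative inverse, for f with unit constant term:
   g_0 = c, g_(m+1) = - c * sum_(j=1)^(m+1) f_j g_(m+1-j), where c = (f 0)^-1 *)
Fixpoint fps_inv_seq (f : fps) (n : nat) : seq ZT :=
  match n with
  | 0 => [:: (f 0%N)^-1]
  | m.+1 => let s := fps_inv_seq f m in
            rcons s (- ((f 0%N)^-1 * \sum_(i < m.+1) f i.+1 * nth 0 s (m - i)%N))
  end.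

Definition fps_inv (f : fps) : fps := fun n => nth 0 (fps_inv_seq f n) n.

(* convergence in the Q-adic topology: every coefficient is eventually constant *)
Definition fps_lim (a : nat -> fps) (l : fps) : Prop :=
  forall n, exists K, forall m, (K <= m)%N -> a m n = l n.

Definition lhs_partial (N : nat) : fps :=
  fun n => \sum_(1 <= k < N.+1)
     fps_mul (fps_of_poly (F k))
             (fps_inv (fps_of_poly (\prod_(1 <= i < k.+1) fac i ^+ 2))) n.

Definition rhs_partial_prod (N : nat) : fps :=
  fps_of_poly (\prod_(1 <= i < N.+1) fac i).

(* Main.v *)
Require Import Defs.
From mathcomp Require Import all_boot all_order all_algebra.
From mathcomp Require Import ring zify.
Set Implicit Arguments. Unset Strict Implicit. Unset Printing Implicit Defensive.
Import GRing.Theory.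
Local Open Scope ring_scope.

Lemma lin_comb2 (R : comPzRingType) (L Rr X Y X0 Y0 k1 k0 : R) :
  X = Y -> X0 = Y0 -> L - Rr = k1 * (X - Y) + k0 * (X0 - Y0) -> L = Rr.
Proof.
move=> -> ->; rewrite !subrr !mulr0 addr0 => /eqP; rewrite subr_eq0 => /eqP //.
Qed.

Lemma lin_comb1 (R : comPzRingType) (L Rr X Y k1 : R) :
  X = Y -> L - Rr = k1 * (X - Y) -> L = Rr.
Proof.
move=> -> ; rewrite !subrr !mulr0 => /eqP; rewrite subr_eq0 => /eqP //.
Qed.

Lemma exprSplit (R : comPzRingType) (z : R) e E : (e <= E)%N -> z ^+ E = z ^+ e * z ^+ (E - e).
Proof. by move=> h; rewrite -exprD subnKC. Qed.

Fixpoint Cc (R : comPzRingType) (z : R) (n j : nat) {struct n} : R :=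
  match n with
  | 0 => if j is 0 then 1 else 0
  | n'.+1 => if j is j'.+1 then
       z ^+ j'.+1 * Cc z n' j'.+1 + (1 - z ^+ ((n' + n').+1 - j')) * Cc z n' j'
     else 1
  end.

Fixpoint Gc (R : comPzRingType) (z : R) (n j : nat) {struct n} : R :=
  match n with
  | 0 => if j is 0 then 1 else 0
  | n'.+1 => if j is j'.+1 then z ^+ j'.+1 * Gc z n' j'.+1 + Gc z n' j' else 1
  end.

Lemma CcS (R : comPzRingType) (z : R) n j : Cc z n.+1 j.+1 =
  z ^+ j.+1 * Cc z n j.+1 + (1 - z ^+ ((n + n).+1 - j)) * Cc z n j.
Proof. by []. Qed.

Lemma Cc0 (R : comPzRingType) (z : R) n : Cc z n 0 = 1.
Proof. by case: n. Qed.
Lemma Gc0 (R : comPzRingType) (z : R) n : Gc z n 0 = 1.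
Proof. by case: n. Qed.

Lemma Cc_gt (R : comPzRingType) (z : R) n j : (n < j)%N -> Cc z n j = 0.
Proof.
elim: n j => [|n IH] [|j] //= h.
by rewrite !IH ?mulr0 ?addr0 //; lia.
Qed.

Lemma Gc_gt (R : comPzRingType) (z : R) n j : (n < j)%N -> Gc z n j = 0.
Proof.
elim: n j => [|n IH] [|j] //= h.
by rewrite !IH ?mulr0 ?addr0 //; lia.
Qed.

Lemma Cc_R1 (R : comPzRingType) (z : R) n j : (j <= n)%N ->
  (1 - z ^+ j.+1) * Cc z n j.+1 = (1 - z ^+ (n - j)) ^+ 2 * Cc z n j.
Proof.
elim: n j => [|n IH] j hj.
  have -> : j = 0%N by lia.
  by rewrite /= subrr expr0n /= mulr0 mul0r.
case: j hj => [|j] hj.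
  have H := IH 0%N (leq0n n).
  rewrite Cc0 subn0 in H.
  rewrite /= Cc0 subn0 mulr1.
  have -> : ((n + n).+1 = n + n + 1)%N by lia.
  rewrite !exprD !expr1.
  apply: (lin_comb1 (k1 := z) H). rewrite subn0 (exprS z n). ring.
case: (ltnP j n) => hjn; last first.
  have -> : j = n by lia.
  by rewrite subSS subnn expr0 subrr expr0n mul0r (Cc_gt z (n:=n.+1) (j:=n.+2)) ?mulr0.
have H1 := IH j.+1 hjn.
have H0 := IH j (ltnW hjn).
rewrite !CcS.
have [m hm] : exists m, n = (j.+1 + m)%N by exists (n - j.+1)%N; lia.
have -> : ((n + n).+1 - j.+1 = j + 2 + m + m)%N by lia.
have -> : ((n + n).+1 - j = j + 3 + m + m)%N by lia.
have -> : (n.+1 - j.+1 = m + 1)%N by lia.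
rewrite (_ : (n - j.+1 = m)%N) in H1; last by lia.
rewrite (_ : (n - j = m + 1)%N) in H0; last by lia.
move: H1 H0; rewrite !exprD !exprS !expr0 ?expr1 => H1 H0.
apply: (lin_comb2 (k1 := z * (z * z ^+ j)) (k0 := 1 - z^+j * z * z * z * z^+m * z^+m) H1 H0).
ring.
Qed.

Lemma shift_sum (R : nmodType) (N : nat) (f g h : nat -> R) :
  f 0%N = g 0%N -> (forall j, (j < N.+1)%N -> f j.+1 = g j.+1 + h j) ->
  \sum_(j < N.+2) f j = \sum_(j < N.+2) g j + \sum_(j < N.+1) h j.
Proof.
move=> h0 hS.
rewrite big_ord_recl [X in _ = X + _]big_ord_recl h0 -addrA -big_split /=.
congr (_ + _); apply: eq_bigr => i _.
by rewrite /bump /= add1n hS.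
Qed.

Lemma ext_sum (R : nmodType) (N : nat) (F : nat -> R) :
  F N.+1 = 0 -> \sum_(j < N.+1) F j = \sum_(j < N.+2) F j.
Proof. by move=> h; rewrite [RHS]big_ord_recr /= h addr0. Qed.

Definition aterm (R : comPzRingType) (z y : R) N j :=
  y ^+ j * z ^+ 'C(j, 2) * Cc z N j.
Definition bterm (R : comPzRingType) (z y : R) N j :=
  y ^+ j * z ^+ 'C(j, 2) * z ^+ (N - j) * Cc z N j.
Definition alph (R : comPzRingType) (z y : R) N := \sum_(j < N.+1) aterm z y N j.
Definition bet (R : comPzRingType) (z y : R) N := \sum_(j < N.+1) bterm z y N j.

Lemma binS2 j : 'C(j.+1, 2) = ('C(j, 2) + j)%N.
Proof. by rewrite binS bin1. Qed.

Lemma alph_rec (R : comPzRingType) (z y : R) N :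
  alph z y N.+1 = alph z y N * (1 + y * z ^+ N *+ 2 - y * z ^+ N * z ^+ N * z)
                  - y * z ^+ N * bet z y N.
Proof.
have -> : alph z y N * (1 + y * z ^+ N *+ 2 - y * z ^+ N * z ^+ N * z)
          - y * z ^+ N * bet z y N =
   alph z y N + \sum_(j < N.+1) y * (aterm z y N j *
        (z ^+ N *+ 2 - z ^+ N * z ^+ N * z) - z ^+ N * bterm z y N j).
  rewrite /alph /bet mulr_suml mulr_sumr -sumrB -big_split /=.
  by apply: eq_bigr => i _; ring.
rewrite /alph (ext_sum (N := N) (F := aterm z y N)); last by rewrite /aterm Cc_gt ?mulr0.
apply: (shift_sum (f := aterm z y N.+1) (g := aterm z y N) (h := fun j => y * (aterm z y N j *
        (z ^+ N *+ 2 - z ^+ N * z ^+ N * z) - z ^+ N * bterm z y N j))) => [|j hj]; first by rewrite /aterm !Cc0.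
rewrite /aterm /bterm CcS binS2.
have R1 := Cc_R1 z (ltnSE hj).
have [m hm] : exists m, N = (j + m)%N by exists (N - j)%N; lia.
have -> : ((N + N).+1 - j = j + m + m + 1)%N by lia.
have -> : (N - j = m)%N by lia.
rewrite (_ : (N - j = m)%N) in R1; last by lia.
subst N; move: R1; rewrite !exprD !exprS ?expr1 => R1.
apply: (lin_comb1 (k1 := - (y * y ^+ j * z ^+ 'C(j, 2) * z ^+ j)) R1).
ring.
Qed.

Lemma bet_rec (R : comPzRingType) (z y : R) N :
  bet z y N.+1 = alph z y N * (z ^+ N * z + y * z ^+ N)
                  - y * z ^+ N * z ^+ N * z * bet z y N.
Proof.
have -> : alph z y N * (z ^+ N * z + y * z ^+ N)
                  - y * z ^+ N * z ^+ N * z * bet z y N =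
   \sum_(j < N.+1) z ^+ N * z * aterm z y N j + \sum_(j < N.+1) y * (z ^+ N * aterm z y N j
        - z ^+ N * z ^+ N * z * bterm z y N j).
  rewrite /alph /bet mulr_suml mulr_sumr -sumrB -big_split /=.
  by apply: eq_bigr => i _; ring.
rewrite /bet (ext_sum (N := N) (F := fun j => z ^+ N * z * aterm z y N j)); last by rewrite /aterm Cc_gt ?mulr0.
apply: (shift_sum (f := bterm z y N.+1) (g := fun j => z ^+ N * z * aterm z y N j) (h := fun j => y * (z ^+ N * aterm z y N j
        - z ^+ N * z ^+ N * z * bterm z y N j))) => [|j hj]; first by rewrite /aterm /bterm !Cc0 subn0 exprS; ring.
rewrite /aterm /bterm CcS binS2.
have [m hm] : exists m, N = (j + m)%N by exists (N - j)%N; lia.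
have -> : ((N + N).+1 - j = j + m + m + 1)%N by lia.
have -> : (N.+1 - j.+1 = m)%N by lia.
have -> : (N - j = m)%N by lia.
rewrite hm !exprD !exprS ?expr1.
ring.
Qed.

Lemma qbin (R : comPzRingType) (z : R) N : forall y,
  \prod_(i < N) (1 + y * z ^+ i) = \sum_(j < N.+1) y ^+ j * z ^+ 'C(j, 2) * Gc z N j.
Proof.
elim: N => [|N IH] y.
  by rewrite big_ord0 big_ord1 /= !expr0 !mul1r.
rewrite big_ord_recl.
have -> : \prod_(i < N) (1 + y * z ^+ lift ord0 i) = \prod_(i < N) (1 + (y * z) * z ^+ i).
  by apply: eq_bigr => i _; rewrite lift0 exprS mulrA.
rewrite IH expr0 mulr1 mulrDl mul1r mulr_sumr.
rewrite (ext_sum (N := N) (F := fun j => (y * z) ^+ j * z ^+ 'C(j, 2) * Gc z N j)); last by rewrite Gc_gt ?mulr0.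
symmetry. apply: (@shift_sum _ N (fun j => y ^+ j * z ^+ 'C(j, 2) * Gc z N.+1 j) (fun j => (y * z) ^+ j * z ^+ 'C(j, 2) * Gc z N j) (fun j => y * ((y * z) ^+ j * z ^+ 'C(j, 2) * Gc z N j))) => [|j hj]; first by rewrite !Gc0 !expr0.
rewrite /= binS2 !exprD ?exprS exprMn. ring.
Qed.

Lemma CG (R : comPzRingType) (z : R) n : forall j,
  exists r, Cc z n j - Gc z n j = z ^+ (n.+1 - j) * r.
Proof.
elim: n => [|n IH] j.
  by exists 0; case: j => [|j] /=; rewrite ?subrr ?subr0 mulr0.
case: j => [|j]; first by exists 0; rewrite Cc0 Gc0 subrr mulr0.
have [r1 h1] := IH j.+1.
have [r0 h0] := IH j.
rewrite CcS /=.
set e := (n.+1 - j)%N.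
have e1 : (e <= j.+1 + (n - j))%N by rewrite /e; lia.
have e2 : (e <= (n + n).+1 - j)%N by rewrite /e; lia.
exists (z ^+ (j.+1 + (n - j) - e) * r1 + r0 - z ^+ ((n + n).+1 - j - e) * Cc z n j).
rewrite (exprSplit z e2).
have : z ^+ j.+1 * (Cc z n j.+1 - Gc z n j.+1) = z ^+ (j.+1 + (n - j)) * r1.
  by rewrite h1 subSS mulrA exprD.
rewrite (exprSplit z e1).
have E := h0.
move: E; rewrite -/e.
set A := z ^+ e. set B := z ^+ ((n + n).+1 - j - e).
set C := z ^+ (j.+1 + (n - j) - e).
set c1 := Cc z n j.+1. set g1 := Gc z n j.+1.
set c0 := Cc z n j. set g0 := Gc z n j.
set Zj := z ^+ j.+1 => E h1'.
apply: (lin_comb2 (k1 := 1) (k0 := 1) h1' E).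
ring.
Qed.

Definition zz : PQ := Qv * Tv ^+ 2.
Definition Pp (N : nat) : PQ := \prod_(1 <= i < N.+1) fac i.

Fixpoint wvec (N : nat) : 'rV[PQ]_2 :=
  match N with 0 => const_mx 1 | N'.+1 => wvec N' *m Mks N'.+1 1 end.

Lemma rv2E (u : 'rV[PQ]_2) (M : 'M[PQ]_(2, 2)) j :
  (u *m M) 0 j = u 0 0 * M 0 j + u 0 1 * M 1 j.
Proof.
rewrite mxE big_ord_recl big_ord1.
have -> : lift ord0 ord0 = 1 :> 'I_2 by apply: val_inj.
by have -> : ord0 = 0 :> 'I_2 by apply: val_inj.
Qed.

Lemma rv2cE (u : 'rV[PQ]_2) (v : 'cV[PQ]_2) :
  (u *m v) 0 0 = u 0 0 * v 0 0 + u 0 1 * v 1 0.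
Proof.
rewrite mxE big_ord_recl big_ord1.
have -> : lift ord0 ord0 = 1 :> 'I_2 by apply: val_inj.
by have -> : ord0 = 0 :> 'I_2 by apply: val_inj.
Qed.

Lemma Pp_qbin N : Pp N = \prod_(i < N) (1 + (- Qv) * zz ^+ i).
Proof.
rewrite /Pp big_add1 /= big_mkord; apply: eq_bigr => i _.
rewrite /fac /zz subSS subn0 exprMn -exprM !mul2n -!addnn !exprD exprS; ring.
Qed.

Lemma powz N : zz ^+ N = Qv ^+ N * (Tv ^+ N * Tv ^+ N).
Proof.
rewrite /zz exprMn; congr (_ * _).
by rewrite -exprD addnn -mul2n exprM.
Qed.

Lemma wvec_closed N : wvec N 0 0 = alph zz (- Qv) N /\ wvec N 0 1 = bet zz (- Qv) N.
Proof.
elim: N => [|N [IH0 IH1]].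
  by rewrite /alph /bet !big_ord1 /aterm /bterm /= !mxE !expr0 !mul1r.
rewrite /= !rv2E IH0 IH1 alph_rec bet_rec.
rewrite /Mks !mxE /= subn1 /= addn1.
have -> : (4 * N = N + N + N + N)%N by lia.
have -> : (2 * N.+1 = N.+1 + N.+1)%N by lia.
have -> : (2 * N = N + N)%N by lia.
rewrite !exprD !powz !exprS.
set A := alph _ _ _. set B := bet _ _ _.
set QN := Qv ^+ N. set TN := Tv ^+ N.
rewrite /zz.
split; ring.
Qed.

Lemma a_close N : exists r, wvec N 0 0 - Pp N = Qv ^+ N.+1 * r.
Proof.
have [-> _] := wvec_closed N.
rewrite Pp_qbin qbin /alph -sumrB.
apply: (big_ind (fun x : PQ => exists r, x = Qv ^+ N.+1 * r)).
- by exists 0; rewrite mulr0.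
- by move=> x1 x2 [r1 ->] [r2 ->]; exists (r1 + r2); rewrite mulrDr.
move=> [j hj] _ /=.
have [r hr] := CG zz N j.
rewrite /aterm -mulrBr hr (powz (N.+1 - j)) exprNn.
have hjN : (j <= N.+1)%N by lia.
exists ((-1) ^+ j * zz ^+ 'C(j, 2) * (Tv ^+ (N.+1 - j) * Tv ^+ (N.+1 - j)) * r).
rewrite (exprSplit Qv hjN).
ring.
Qed.

Lemma Mks_shift k s : Mks k s = Mks (k - s + 1) 1.
Proof. by rewrite /Mks addnK. Qed.

Lemma Vrec_w k : forall j, (j < k)%N ->
  wvec (k.-1 - j) *m Vrec k j = wvec k.-1 *m Vk1 k.
Proof.
elim=> [|j IH] hj; first by rewrite subn0.
rewrite /= mulmxA Mks_shift.
have -> : (k - j.+2 + 1 = (k.-1 - j.+1).+1)%N by lia.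
have -> : wvec (k.-1 - j.+1) *m Mks (k.-1 - j.+1).+1 1 = wvec (k.-1 - j.+1).+1 by [].
have -> : ((k.-1 - j.+1).+1 = k.-1 - j)%N by lia.
by apply: IH; lia.
Qed.

Lemma F_w k : (2 <= k)%N -> F k = (wvec k.-1 *m Vk1 k) 0 0.
Proof.
move=> hk.
have hk1 : (k != 1)%N by lia.
rewrite /F (negbTE hk1) -(@Vrec_w k (k - 1)); last by lia.
have -> : (k.-1 - (k - 1) = 0)%N by lia.
rewrite rv2cE /= !mxE !mul1r /Vk.
done.
Qed.

Lemma F1_w : F 1 = wvec 1 0 0.
Proof.
rewrite /F /= rv2E !mxE /=.
ring.
Qed.

Lemma a_rec N : wvec N.+1 0 0 = fac N.+1 ^+ 2 * wvec N 0 0 + (wvec N *m Vk1 N.+1) 0 0.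
Proof.
rewrite /= rv2E rv2cE /Mks /Vk1 /fac !mxE /= subn1 /= addn1.
ring.
Qed.

Definition eqn (n : nat) (p q : PQ) := forall i, (i <= n)%N -> p`_i = q`_i.

Lemma eqn_refl n p : eqn n p p. Proof. by []. Qed.
Lemma eqn_sym n p q : eqn n p q -> eqn n q p.
Proof. by move=> h i hi; rewrite h. Qed.
Lemma eqn_trans n p q r : eqn n p q -> eqn n q r -> eqn n p r.
Proof. by move=> h1 h2 i hi; rewrite h1 ?h2. Qed.
Lemma eqn_add n p q p' q' : eqn n p p' -> eqn n q q' -> eqn n (p + q) (p' + q').
Proof. by move=> h1 h2 i hi; rewrite !coefD h1 ?h2. Qed.
Lemma eqn_mul n p q p' q' : eqn n p p' -> eqn n q q' -> eqn n (p * q) (p' * q').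
Proof.
move=> h1 h2 i hi; rewrite !coefM; apply: eq_bigr => [[j hj]] _ /=.
have hj' : (j <= n)%N by lia.
have hj'' : (i - j <= n)%N by lia.
by rewrite h1 // h2.
Qed.
Lemma eqn_Xn n m p q r : (n < m)%N -> p - q = Qv ^+ m * r -> eqn n p q.
Proof.
move=> hm h i hi; apply/eqP; rewrite -subr_eq0 -coefB h /Qv coefXnM.
by have -> : (i < m)%N by lia.
Qed.

Lemma eqn_prod n (r : seq nat) (P : pred nat) (G : nat -> PQ) :
  (forall i, P i -> eqn n (G i) 1) -> eqn n (\prod_(i <- r | P i) G i) 1.
Proof.
move=> h; apply: (big_ind (fun x => eqn n x 1)) => //.
by move=> x y hx hy; rewrite -(mulr1 1); apply: eqn_mul.
Qed.

Lemma fac_eqn n i : (n < i)%N -> eqn n (fac i) 1.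
Proof.
move=> hi; apply: (@eqn_Xn n i _ _ (- Tv ^+ (2 * (i - 1)))) => //.
by rewrite /fac; ring.
Qed.

Definition Pp2 (k : nat) : PQ := \prod_(1 <= i < k.+1) fac i ^+ 2.

Lemma Pp2E k : Pp2 k = Pp k * Pp k.
Proof. by rewrite /Pp2 /Pp -big_split; apply: eq_bigr => i _; rewrite expr2. Qed.

Lemma eqn_prod_nat n m p (G : nat -> PQ) :
  (forall i, (m <= i < p)%N -> eqn n (G i) 1) -> eqn n (\prod_(m <= i < p) G i) 1.
Proof.
move=> h; rewrite big_nat_cond; apply: eqn_prod => i /andP[hi _]; exact: h.
Qed.

Lemma Pp_eqn0 k : eqn 0 (Pp k) 1.
Proof. by apply: eqn_prod_nat => i /andP[hi _]; apply: fac_eqn. Qed.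

Lemma Pp2_eqn0 k : eqn 0 (Pp2 k) 1.
Proof.
apply: eqn_prod_nat => i /andP[hi _]; rewrite expr2 -(mulr1 1).
by apply: eqn_mul; apply: fac_eqn.
Qed.

Lemma Pp_stable i m : (i <= m)%N -> eqn i (Pp m) (Pp i).
Proof.
move=> him; have him' : (i.+1 <= m.+1)%N by lia.
rewrite /Pp (@big_cat_nat _ _ _ i.+1) //=.
rewrite -{2}(mulr1 (\prod_(1 <= k < i.+1) fac k)).
apply: eqn_mul => //; apply: eqn_prod_nat => k /andP[hk _].
by apply: fac_eqn.
Qed.

Lemma fps_inv_seq_size f m : size (fps_inv_seq f m) = m.+1.
Proof. by elim: m => [|m IH] //=; rewrite size_rcons IH. Qed.

Lemma fps_inv_nth f m i : (i <= m)%N -> nth 0 (fps_inv_seq f m) i = fps_inv f i.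
Proof.
elim: m i => [|m IH] i hi.
  by have -> : i = 0%N by lia.
case: (ltnP i m.+1) => h.
  by rewrite /= nth_rcons fps_inv_seq_size h IH.
by have -> : i = m.+1 by lia.
Qed.

Lemma fps_inv0 f : fps_inv f 0 = (f 0%N)^-1.
Proof. by []. Qed.

Lemma fps_invS f m : fps_inv f m.+1 =
  - ((f 0%N)^-1 * \sum_(i < m.+1) f i.+1 * fps_inv f (m - i)%N).
Proof.
rewrite {1}/fps_inv /= nth_rcons fps_inv_seq_size ltnn eqxx.
congr (- (_ * _)); apply: eq_bigr => i _.
by rewrite fps_inv_nth // leq_subr.
Qed.

Lemma fps_inv_ext f g n : (forall i, (i <= n)%N -> f i = g i) ->
  forall i, (i <= n)%N -> fps_inv f i = fps_inv g i.
Proof.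
move=> h.
suff : forall m, (m <= n)%N -> forall i, (i <= m)%N -> fps_inv f i = fps_inv g i.
  by move=> H i hi; apply: (H n).
elim=> [|m IH] hm i hi.
  have -> : i = 0%N by lia. by rewrite !fps_inv0 h.
case: (ltnP i m.+1) => hi'.
  by apply: IH => //; lia.
have -> : i = m.+1 by lia.
rewrite !fps_invS h //; congr (- (_ * _)); apply: eq_bigr => [[j hj]] _ /=.
rewrite h; last by lia.
by rewrite IH //; lia.
Qed.

Lemma inv_conv (p : PQ) : p`_0 = 1 -> forall m,
  \sum_(i < m.+1) p`_i * fps_inv (fps_of_poly p) (m - i)%N = (m == 0%N)%:R.
Proof.
move=> h0 [|m].
  by rewrite big_ord1 /= fps_inv0 /fps_of_poly h0 invr1 mulr1.
rewrite big_ord_recl fps_invS /fps_of_poly h0 invr1 mul1r mul1r /=.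
rewrite (_ : \sum_(i < m.+1) p`_(bump 0 i) * fps_inv (fun n => p`_n) (m.+1 - bump 0 i)%N
   = \sum_(i < m.+1) p`_i.+1 * fps_inv (fun n => p`_n) (m - i)%N).
  by rewrite addNr.
by apply: eq_bigr => i _; rewrite /bump /= add1n subSS.
Qed.

Definition invp n (p : PQ) : PQ := \poly_(i < n.+1) fps_inv (fps_of_poly p) i.

Lemma invp_ok n (p : PQ) : p`_0 = 1 -> eqn n (p * invp n p) 1.
Proof.
move=> h0 i hi; rewrite coefM coef1 -(inv_conv h0 i).
apply: eq_bigr => [[j hj]] _ /=.
rewrite coef_poly.
by have -> : (i - j < n.+1)%N by lia.
Qed.

Lemma inv_unique n (p h g : PQ) : eqn n (p * h) 1 -> eqn n (p * g) 1 -> eqn n h g.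
Proof.
move=> hh hg.
apply: (@eqn_trans _ _ (h * (p * g))).
  by rewrite -{1}(mulr1 h); apply: eqn_mul => //; apply: eqn_sym.
rewrite mulrA [h * p]mulrC -[g in eqn _ _ g]mul1r.
by apply: eqn_mul.
Qed.

Lemma fps_mul_poly (p : PQ) h n : fps_mul (fps_of_poly p) h n = (p * \poly_(i < n.+1) h i)`_n.
Proof.
rewrite coefM; apply: eq_bigr => [[j hj]] _ /=.
rewrite coef_poly.
by have -> : (n - j < n.+1)%N by lia.
Qed.

Lemma coef0_1 (p : PQ) : eqn 0 p 1 -> p`_0 = 1.
Proof. by move=> h; rewrite h // coef1. Qed.

Lemma lhs_eq N n : lhs_partial N n = (\sum_(1 <= k < N.+1) F k * invp n (Pp2 k))`_n.
Proof.
rewrite /lhs_partial coef_sum; apply: eq_bigr => k _.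
by rewrite fps_mul_poly.
Qed.

Lemma Pp2S N : Pp2 N.+1 = Pp2 N * fac N.+1 ^+ 2.
Proof. by rewrite /Pp2 big_nat_recr. Qed.

Lemma S_claim n N : (1 <= N)%N ->
  eqn n (\sum_(1 <= k < N.+1) F k * invp n (Pp2 k)) (wvec N 0 0 * invp n (Pp2 N)).
Proof.
elim: N => [//|N IH] hN.
case: (posnP N) => [->|hN0].
  by rewrite big_nat1 F1_w.
have hF : F N.+1 = (wvec N *m Vk1 N.+1) 0 0 by rewrite F_w //; lia.
rewrite big_nat_recr //= a_rec -hF.
have hinv : eqn n (invp n (Pp2 N)) (fac N.+1 ^+ 2 * invp n (Pp2 N.+1)).
  apply: (@inv_unique n (Pp2 N)).
    by apply: invp_ok; apply: coef0_1; apply: Pp2_eqn0.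
  rewrite mulrA -Pp2S.
  by apply: invp_ok; apply: coef0_1; apply: Pp2_eqn0.
apply: eqn_trans.
  apply: eqn_add; first exact: (IH hN0).
  exact: eqn_refl.
apply: eqn_trans.
  apply: eqn_add; last exact: eqn_refl.
  apply: eqn_mul; first exact: eqn_refl.
  exact: hinv.
have -> : wvec N 0 0 * (fac N.+1 ^+ 2 * invp n (Pp2 N.+1)) + F N.+1 * invp n (Pp2 N.+1)
  = (fac N.+1 ^+ 2 * wvec N 0 0 + F N.+1) * invp n (Pp2 N.+1) by ring.
exact: eqn_refl.
Qed.

Definition Pfps : fps := fun i => (Pp i)`_i.

Lemma main_lhs n m : (n < m)%N -> lhs_partial m n = fps_inv Pfps n.
Proof.
move=> hnm.
rewrite lhs_eq.
have hm1 : (1 <= m)%N by lia.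
have hS := @S_claim n m hm1.
have [r hr] := a_close m.
have ha : eqn n (wvec m 0 0) (Pp m) by apply: (eqn_Xn (m := m.+1) _ hr); lia.
have h2 : eqn n (Pp m * invp n (Pp2 m)) (invp n (Pp m)).
  apply: (@inv_unique n (Pp m)).
    rewrite mulrA -Pp2E.
    by apply: invp_ok; apply: coef0_1; apply: Pp2_eqn0.
  by apply: invp_ok; apply: coef0_1; apply: Pp_eqn0.
have h3 : eqn n (\sum_(1 <= k < m.+1) F k * invp n (Pp2 k)) (invp n (Pp m)).
  apply: (eqn_trans hS); apply: (eqn_trans _ h2).
  by apply: eqn_mul => //; apply: eqn_refl.
rewrite h3 // coef_poly ltnSn.
apply: fps_inv_ext (leqnn n) => i hi.
rewrite /fps_of_poly /Pfps.
by apply: Pp_stable => //; lia.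
Qed.

Theorem mainTheorem7 :
  exists (L P : fps),
    fps_lim lhs_partial L /\ fps_lim rhs_partial_prod P /\
    forall n : nat, L n = fps_inv P n.
Proof.
exists (fun n => lhs_partial n.+1 n), Pfps.
split; last split.
- move=> n; exists n.+1 => m hm.
  by rewrite !main_lhs.
- move=> n; exists n => m hm.
  rewrite /rhs_partial_prod /fps_of_poly /Pfps.
  by apply: Pp_stable.
- by move=> n; rewrite main_lhs.
Qed.
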